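(* Let $t\in\{1,2,3,4,5,6\}$, let $e_1,\dots,e_t$ be the standard basis of $\mathbb{F}_2^t$, and let $M$ be a maximal Sidon set of $\mathbb{F}_2^t$. Then there exists an affine permutation $T\colon\mathbb{F}_2^t\to\mathbb{F}_2^t$ such that $T(M)$ equals: for $t=1$: $\{0,e_1\}=\mathbb{F}_2^1$ (size 2); for $t=2$: $\{0,e_1,e_2\}=\mathbb{F}_2^2\setminus\{e_1+e_2\}$ (size 3); for $t=3$: $\{0,e_1,e_2,e_3\}$ (size 4); for $t=4$: $\{0,e_1,e_2,e_3,e_4,e_1+e_2+e_3+e_4\}$ (size 6); for $t=5$: $\{0,e_1,e_2,e_3,e_4,e_5,e_1+e_2+e_3+e_4\}$ (size 7); for $t=6$: either $M_{6a}=\{0,e_1,e_2,e_3,e_4,e_5,e_6,e_1+e_2+e_3+e_4,e_1+e_2+e_5+e_6\}$ (size 9) or $M_{6b}=\{0,e_1,e_2,e_3,e_4,e_5,e_6,e_1+e_2+e_3+e_4+e_5+e_6\}$ (size 8).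
   Context: $\mathbb{F}_2^t$ is the $t$-dimensional vector space over $\mathbb{F}_2$. A subset $M\subseteq \mathbb{F}_2^t$ is Sidon if $m_1+m_2\neq m_3+m_4$ for all pairwise distinct $m_1,m_2,m_3,m_4\in M$. A Sidon set $M$ is maximal if $M=S$ for every Sidon set $S$ with $M\subseteq S\subseteq\mathbb{F}_2^t$. An affine permutation of $\mathbb{F}_2^t$ is a map $x\mapsto L(x)+a$ with $L$ an invertible linear map and $a\in\mathbb{F}_2^t$. *)

(* Defs.v *)
From mathcomp Require Import all_boot all_order all_algebra all_fingroup.
Set Implicit Arguments. Unset Strict Implicit. Unset Printing Implicit Defensive.
Import GRing.Theory.
Local Open Scope ring_scope.

Definition sidon (t : nat) (M : {set 'rV['F_2]_t}) : Prop :=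
  forall m1 m2 m3 m4 : 'rV['F_2]_t,
    m1 \in M -> m2 \in M -> m3 \in M -> m4 \in M ->
    m1 != m2 -> m1 != m3 -> m1 != m4 -> m2 != m3 -> m2 != m4 -> m3 != m4 ->
    m1 + m2 != m3 + m4.

Definition maximal_sidon (t : nat) (M : {set 'rV['F_2]_t}) : Prop :=
  sidon M /\ forall S : {set 'rV['F_2]_t}, sidon S -> M \subset S -> M = S.

(* Standard basis vector e_i (1-indexed): e t i has a 1 in coordinate i-1. *)
Definition e (t : nat) (i : nat) : 'rV['F_2]_t :=
  \row_(j < t) (if (j : nat) == i.-1 then 1 else 0).

Definition affine_image (t : nat) (L : 'M['F_2]_t) (a : 'rV['F_2]_t)
  (M : {set 'rV['F_2]_t}) : {set 'rV['F_2]_t} :=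
  [set x *m L + a | x in M].

Definition normal_forms (t : nat) : seq {set 'rV['F_2]_t} :=
  let e := e t in
  if t == 1%N then [:: [set 0; e 1%N]]
  else if t == 2%N then [:: [set 0; e 1%N; e 2%N]]
  else if t == 3%N then [:: [set 0; e 1%N; e 2%N; e 3%N]]
  else if t == 4%N then
    [:: [set 0; e 1%N; e 2%N; e 3%N; e 4%N; e 1%N + e 2%N + e 3%N + e 4%N]]
  else if t == 5%N then
    [:: [set 0; e 1%N; e 2%N; e 3%N; e 4%N; e 5%N; e 1%N + e 2%N + e 3%N + e 4%N]]
  else if t == 6%N then
    [:: [set 0; e 1%N; e 2%N; e 3%N; e 4%N; e 5%N; e 6%N;
          e 1%N + e 2%N + e 3%N + e 4%N; e 1%N + e 2%N + e 5%N + e 6%N];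
        [set 0; e 1%N; e 2%N; e 3%N; e 4%N; e 5%N; e 6%N;
          e 1%N + e 2%N + e 3%N + e 4%N + e 5%N + e 6%N]]
  else [::].

(* Main.v *)
Require Import Defs.
From mathcomp Require Import all_boot all_order all_algebra all_fingroup.
Set Implicit Arguments. Unset Strict Implicit. Unset Printing Implicit Defensive.
Import GRing.Theory.

Fixpoint allL (T : Type) (p : T -> bool) (s : seq T) : bool :=
  if s is x :: s' then (if p x then allL p s' else false) else true.
Fixpoint hasL (T : Type) (p : T -> bool) (s : seq T) : bool :=
  if s is x :: s' then (if p x then true else hasL p s') else false.

Fixpoint bxor (s s' : seq bool) : seq bool :=
  match s, s' with
  | x :: s1, y :: s2 => addb x y :: bxor s1 s2
  | [::], _ => s'
  | _, [::] => s
  end.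

Fixpoint beq (s s' : seq bool) : bool :=
  match s, s' with
  | x :: a, y :: b => if x then (if y then beq a b else false) else (if y then false else beq a b)
  | [::], [::] => true
  | _, _ => false
  end.
Fixpoint memb (x : seq bool) (l : seq (seq bool)) : bool :=
  if l is y :: l' then (if beq x y then true else memb x l') else false.

Fixpoint U (n : nat) : seq (seq bool) :=
  if n is n'.+1 then [seq false :: s | s <- U n'] ++ [seq true :: s | s <- U n']
  else [:: [::]].

Definition zeros t := nseq t false.
Definition ev t i := mkseq (fun j => j == i) t.
Definition Bc t := zeros t :: [seq ev t i | i <- iota 0 t].
Definition compl t := [seq s <- U t | ~~ memb s (Bc t)].

Definition sidonb (l : seq (seq bool)) : bool :=
  allL (fun a => allL (fun b => allL (fun c =>
    if beq a b then true else if beq a c then true else if beq b c then true else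
    let d := bxor a (bxor b c) in
    if memb d l then [|| beq d a, beq d b | beq d c] else true) l) l) l.

Definition linc t (rows : seq (seq bool)) (s : seq bool) :=
  foldr (fun i acc => if nth false s i then bxor (nth [::] rows i) acc else acc)
    (zeros t) (iota 0 t).
Definition affm t rows av s := bxor (linc t rows s) av.
Definition invok t rows inv :=
  allL (fun i => beq (linc t inv (nth [::] rows i)) (ev t i)) (iota 0 t).
Definition seteq (l1 l2 : seq (seq bool)) := allL (fun x => memb x l2) l1 && allL (fun x => memb x l1) l2.

Definition NFc t : seq (seq (seq bool)) :=
  let e i := ev t i.-1 in
  let B := Bc t in
  if t == 1 then [:: B] else if t == 2 then [:: B] else if t == 3 then [:: B]
  else if t == 4 then [:: B ++ [:: bxor (bxor (bxor (e 1) (e 2)) (e 3)) (e 4)]]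
  else if t == 5 then [:: B ++ [:: bxor (bxor (bxor (e 1) (e 2)) (e 3)) (e 4)]]
  else if t == 6 then
   [:: B ++ [:: bxor (bxor (bxor (e 1) (e 2)) (e 3)) (e 4);
              bxor (bxor (bxor (e 1) (e 2)) (e 5)) (e 6)];
       B ++ [:: bxor (bxor (bxor (bxor (bxor (e 1) (e 2)) (e 3)) (e 4)) (e 5)) (e 6)]]
  else [::].

Definition nb t (n : nat) : seq bool := mkseq (fun j => odd (n %/ 2 ^ j)) t.
Definition certn (t : nat) : seq (seq nat * seq nat * nat) :=
  match t with
  | 1 => [:: ([:: 1], [:: 1], 0)]
  | 2 => [:: ([:: 1; 2], [:: 1; 2], 0)]
  | 3 => [:: ([:: 1; 2; 4], [:: 1; 2; 4], 0)]
  | 4 => [:: ([:: 1; 2; 4; 8], [:: 1; 2; 4; 8], 0)]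
  | 5 => [:: ([:: 1; 2; 4; 8; 16], [:: 1; 2; 4; 8; 16], 0);
    ([:: 1; 2; 4; 16; 8], [:: 1; 2; 4; 16; 8], 0);
    ([:: 1; 2; 16; 4; 8], [:: 1; 2; 8; 16; 4], 0);
    ([:: 1; 16; 2; 4; 8], [:: 1; 4; 8; 16; 2], 0);
    ([:: 16; 1; 2; 4; 8], [:: 2; 4; 8; 16; 1], 0);
    ([:: 16; 17; 18; 20; 24], [:: 3; 5; 9; 17; 1], 16)]
  | 6 => [:: ([:: 1; 2; 4; 8; 16; 32], [:: 1; 2; 4; 8; 16; 32], 0);
    ([:: 1; 2; 4; 8; 16; 32], [:: 1; 2; 4; 8; 16; 32], 0);
    ([:: 1; 4; 2; 8; 16; 32], [:: 1; 4; 2; 8; 16; 32], 0);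
    ([:: 4; 1; 2; 8; 16; 32], [:: 2; 4; 1; 8; 16; 32], 0);
    ([:: 4; 8; 15; 1; 16; 32], [:: 8; 15; 1; 2; 16; 32], 0);
    ([:: 1; 4; 8; 2; 16; 32], [:: 1; 8; 2; 4; 16; 32], 0);
    ([:: 4; 1; 8; 2; 16; 32], [:: 2; 8; 1; 4; 16; 32], 0);
    ([:: 4; 8; 1; 15; 16; 32], [:: 4; 15; 1; 2; 16; 32], 0);
    ([:: 4; 8; 1; 2; 16; 32], [:: 4; 8; 1; 2; 16; 32], 0);
    ([:: 4; 1; 8; 15; 16; 32], [:: 2; 15; 1; 4; 16; 32], 0);
    ([:: 1; 4; 8; 15; 16; 32], [:: 1; 15; 2; 4; 16; 32], 0);
    ([:: 1; 2; 4; 16; 8; 32], [:: 1; 2; 4; 16; 8; 32], 0);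
    ([:: 1; 4; 2; 16; 8; 32], [:: 1; 4; 2; 16; 8; 32], 0);
    ([:: 4; 1; 2; 16; 8; 32], [:: 2; 4; 1; 16; 8; 32], 0);
    ([:: 4; 8; 15; 16; 1; 32], [:: 16; 23; 1; 2; 8; 32], 0);
    ([:: 1; 4; 8; 16; 2; 32], [:: 1; 16; 2; 4; 8; 32], 0);
    ([:: 4; 1; 8; 16; 2; 32], [:: 2; 16; 1; 4; 8; 32], 0);
    ([:: 4; 8; 1; 16; 15; 32], [:: 4; 23; 1; 2; 8; 32], 0);
    ([:: 4; 8; 1; 16; 2; 32], [:: 4; 16; 1; 2; 8; 32], 0);
    ([:: 4; 1; 8; 16; 15; 32], [:: 2; 23; 1; 4; 8; 32], 0);
    ([:: 1; 4; 8; 16; 15; 32], [:: 1; 23; 2; 4; 8; 32], 0);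
    ([:: 1; 2; 4; 16; 32; 8], [:: 1; 2; 4; 32; 8; 16], 0);
    ([:: 1; 4; 16; 2; 8; 32], [:: 1; 8; 2; 16; 4; 32], 0);
    ([:: 4; 1; 16; 2; 8; 32], [:: 2; 8; 1; 16; 4; 32], 0);
    ([:: 4; 8; 16; 15; 1; 32], [:: 16; 27; 1; 2; 4; 32], 0);
    ([:: 1; 4; 16; 8; 2; 32], [:: 1; 16; 2; 8; 4; 32], 0);
    ([:: 4; 1; 16; 8; 2; 32], [:: 2; 16; 1; 8; 4; 32], 0);
    ([:: 4; 8; 16; 1; 15; 32], [:: 8; 27; 1; 2; 4; 32], 0);
    ([:: 4; 8; 16; 1; 2; 32], [:: 8; 16; 1; 2; 4; 32], 0);
    ([:: 4; 1; 16; 8; 15; 32], [:: 2; 27; 1; 8; 4; 32], 0);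
    ([:: 1; 4; 16; 8; 15; 32], [:: 1; 27; 2; 8; 4; 32], 0);
    ([:: 1; 4; 2; 16; 32; 8], [:: 1; 4; 2; 32; 8; 16], 0);
    ([:: 1; 4; 16; 2; 32; 8], [:: 1; 8; 2; 32; 4; 16], 0);
    ([:: 4; 16; 1; 2; 8; 32], [:: 4; 8; 1; 16; 2; 32], 0);
    ([:: 4; 16; 8; 15; 1; 32], [:: 16; 29; 1; 4; 2; 32], 0);
    ([:: 1; 4; 16; 32; 2; 8], [:: 1; 16; 2; 32; 4; 8], 0);
    ([:: 4; 16; 1; 8; 2; 32], [:: 4; 16; 1; 8; 2; 32], 0);
    ([:: 4; 16; 8; 1; 15; 32], [:: 8; 29; 1; 4; 2; 32], 0);
    ([:: 4; 16; 8; 1; 2; 32], [:: 8; 16; 1; 4; 2; 32], 0);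
    ([:: 4; 16; 1; 8; 15; 32], [:: 4; 29; 1; 8; 2; 32], 0);
    ([:: 1; 4; 16; 32; 51; 8], [:: 1; 29; 2; 32; 4; 8], 0);
    ([:: 4; 1; 2; 16; 32; 8], [:: 2; 4; 1; 32; 8; 16], 0);
    ([:: 4; 1; 16; 2; 32; 8], [:: 2; 8; 1; 32; 4; 16], 0);
    ([:: 4; 16; 1; 2; 32; 8], [:: 4; 8; 1; 32; 2; 16], 0);
    ([:: 4; 16; 32; 51; 1; 8], [:: 16; 30; 1; 32; 2; 4], 0);
    ([:: 4; 1; 16; 32; 2; 8], [:: 2; 16; 1; 32; 4; 8], 0);
    ([:: 4; 16; 1; 32; 2; 8], [:: 4; 16; 1; 32; 2; 8], 0);
    ([:: 4; 16; 32; 1; 51; 8], [:: 8; 30; 1; 32; 2; 4], 0);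
    ([:: 4; 16; 32; 1; 2; 8], [:: 8; 16; 1; 32; 2; 4], 0);
    ([:: 4; 16; 1; 32; 51; 8], [:: 4; 30; 1; 32; 2; 8], 0);
    ([:: 4; 1; 16; 32; 51; 8], [:: 2; 30; 1; 32; 4; 8], 0);
    ([:: 4; 8; 15; 16; 32; 1], [:: 32; 39; 1; 2; 8; 16], 0);
    ([:: 4; 8; 16; 15; 32; 1], [:: 32; 43; 1; 2; 4; 16], 0);
    ([:: 4; 16; 8; 15; 32; 1], [:: 32; 45; 1; 4; 2; 16], 0);
    ([:: 4; 16; 32; 51; 8; 1], [:: 32; 46; 1; 16; 2; 4], 0);
    ([:: 4; 8; 16; 32; 15; 1], [:: 32; 51; 1; 2; 4; 8], 0);
    ([:: 4; 16; 8; 32; 15; 1], [:: 32; 53; 1; 4; 2; 8], 0);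
    ([:: 4; 16; 32; 8; 51; 1], [:: 32; 54; 1; 8; 2; 4], 0);
    ([:: 4; 16; 32; 8; 15; 1], [:: 32; 57; 1; 8; 2; 4], 0);
    ([:: 4; 16; 8; 32; 51; 1], [:: 32; 58; 1; 4; 2; 8], 0);
    ([:: 4; 8; 16; 32; 51; 1], [:: 32; 60; 1; 2; 4; 8], 0);
    ([:: 1; 4; 8; 16; 32; 2], [:: 1; 32; 2; 4; 8; 16], 0);
    ([:: 4; 1; 8; 16; 32; 2], [:: 2; 32; 1; 4; 8; 16], 0);
    ([:: 4; 8; 1; 16; 32; 15], [:: 4; 39; 1; 2; 8; 16], 0);
    ([:: 4; 8; 1; 16; 32; 2], [:: 4; 32; 1; 2; 8; 16], 0);
    ([:: 4; 1; 8; 16; 32; 15], [:: 2; 39; 1; 4; 8; 16], 0);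
    ([:: 1; 4; 8; 16; 32; 15], [:: 1; 39; 2; 4; 8; 16], 0);
    ([:: 1; 4; 16; 8; 32; 2], [:: 1; 32; 2; 8; 4; 16], 0);
    ([:: 4; 1; 16; 8; 32; 2], [:: 2; 32; 1; 8; 4; 16], 0);
    ([:: 4; 8; 16; 1; 32; 15], [:: 8; 43; 1; 2; 4; 16], 0);
    ([:: 4; 8; 16; 1; 32; 2], [:: 8; 32; 1; 2; 4; 16], 0);
    ([:: 4; 1; 16; 8; 32; 15], [:: 2; 43; 1; 8; 4; 16], 0);
    ([:: 1; 4; 16; 8; 32; 15], [:: 1; 43; 2; 8; 4; 16], 0);
    ([:: 1; 4; 16; 32; 8; 2], [:: 1; 32; 2; 16; 4; 8], 0);
    ([:: 4; 16; 1; 8; 32; 2], [:: 4; 32; 1; 8; 2; 16], 0);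
    ([:: 4; 16; 8; 1; 32; 15], [:: 8; 45; 1; 4; 2; 16], 0);
    ([:: 4; 16; 8; 1; 32; 2], [:: 8; 32; 1; 4; 2; 16], 0);
    ([:: 4; 16; 1; 8; 32; 15], [:: 4; 45; 1; 8; 2; 16], 0);
    ([:: 1; 4; 16; 32; 8; 51], [:: 1; 45; 2; 16; 4; 8], 0);
    ([:: 4; 1; 16; 32; 8; 2], [:: 2; 32; 1; 16; 4; 8], 0);
    ([:: 4; 16; 1; 32; 8; 2], [:: 4; 32; 1; 16; 2; 8], 0);
    ([:: 4; 16; 32; 1; 8; 51], [:: 8; 46; 1; 16; 2; 4], 0);
    ([:: 4; 16; 32; 1; 8; 2], [:: 8; 32; 1; 16; 2; 4], 0);
    ([:: 4; 16; 1; 32; 8; 51], [:: 4; 46; 1; 16; 2; 8], 0);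
    ([:: 4; 1; 16; 32; 8; 51], [:: 2; 46; 1; 16; 4; 8], 0);
    ([:: 4; 8; 16; 32; 1; 15], [:: 16; 51; 1; 2; 4; 8], 0);
    ([:: 4; 16; 8; 32; 1; 15], [:: 16; 53; 1; 4; 2; 8], 0);
    ([:: 4; 16; 32; 8; 1; 51], [:: 16; 54; 1; 8; 2; 4], 0);
    ([:: 4; 16; 32; 8; 1; 15], [:: 16; 57; 1; 8; 2; 4], 0);
    ([:: 4; 16; 8; 32; 1; 51], [:: 16; 58; 1; 4; 2; 8], 0);
    ([:: 4; 8; 16; 32; 1; 51], [:: 16; 60; 1; 2; 4; 8], 0);
    ([:: 4; 8; 16; 32; 1; 2], [:: 16; 32; 1; 2; 4; 8], 0);
    ([:: 4; 1; 16; 32; 8; 15], [:: 2; 51; 1; 16; 4; 8], 0);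
    ([:: 1; 4; 16; 32; 8; 15], [:: 1; 51; 2; 16; 4; 8], 0);
    ([:: 4; 16; 8; 32; 1; 2], [:: 16; 32; 1; 4; 2; 8], 0);
    ([:: 4; 16; 1; 32; 8; 15], [:: 4; 53; 1; 16; 2; 8], 0);
    ([:: 1; 4; 16; 8; 32; 51], [:: 1; 53; 2; 8; 4; 16], 0);
    ([:: 4; 16; 32; 8; 1; 2], [:: 16; 32; 1; 8; 2; 4], 0);
    ([:: 4; 16; 1; 8; 32; 51], [:: 4; 54; 1; 8; 2; 16], 0);
    ([:: 4; 1; 16; 8; 32; 51], [:: 2; 54; 1; 8; 4; 16], 0);
    ([:: 4; 16; 32; 1; 8; 15], [:: 8; 57; 1; 16; 2; 4], 0);
    ([:: 4; 16; 8; 1; 32; 51], [:: 8; 58; 1; 4; 2; 16], 0);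
    ([:: 4; 8; 16; 1; 32; 51], [:: 8; 60; 1; 2; 4; 16], 0);
    ([:: 1; 4; 8; 16; 32; 51], [:: 1; 57; 2; 4; 8; 16], 0);
    ([:: 4; 1; 8; 16; 32; 51], [:: 2; 58; 1; 4; 8; 16], 0);
    ([:: 4; 8; 1; 16; 32; 51], [:: 4; 60; 1; 2; 8; 16], 0)]
  | _ => [::]
  end.

Definition cert t := map (fun c : seq nat * seq nat * nat => (map (nb t) c.1.1, map (nb t) c.1.2, nb t c.2)) (certn t).

Definition certok t (l : seq (seq bool)) (c : seq (seq bool) * seq (seq bool) * seq bool) :=
  if invok t c.1.1 c.1.2 then
    hasL (fun n => seteq (map (affm t c.1.1 c.2) l) n) (NFc t) else false.

Definition cands t (l : seq (seq bool)) :=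
  let l3 := [seq bxor a bc | a <- l, bc <- [seq bxor b c | b <- l, c <- l]] in
  [seq z <- U t | ~~ memb z l3].

Definition maxcheck t l :=
  if sidonb l then
    (if hasL (fun z => if memb z l then false else sidonb (rcons l z)) (cands t l)
     then true else hasL (certok t l) (cert t))
  else true.

Definition tripcheck t :=
  let B := Bc t in let C := compl t in
  allL (fun x => if sidonb (B ++ [:: x]) then
    allL (fun y => if sidonb (B ++ [:: x; y]) then
      allL (fun z => if [|| beq x y, beq x z | beq y z] then true
                     else ~~ sidonb (B ++ [:: x; y; z])) C
      else true) C else true) C.

Definition fullcheck t :=
  let B := Bc t in let C := compl t in
  [&& tripcheck t, maxcheck t B &
  allL (fun x => if maxcheck t (B ++ [:: x]) then
     allL (fun y => if beq x y then true else maxcheck t (B ++ [:: x; y])) C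
     else false) C].

Arguments ev : simpl never.
Arguments zeros : simpl never.
Arguments Bc : simpl never.
Arguments bxor : simpl never.

Lemma allL_all (T : Type) (p : T -> bool) s : allL p s = all p s.
Proof. by elim: s => //= x s ->; case: (p x). Qed.
Lemma hasL_has (T : Type) (p : T -> bool) s : hasL p s = has p s.
Proof. by elim: s => //= x s ->; case: (p x). Qed.
Lemma beqE s s' : beq s s' = (s == s').
Proof.
elim: s s' => [|x s IH] [|y s'] //=; rewrite eqseq_cons IH.
by case: x; case: y.
Qed.
Lemma membE x l : memb x l = (x \in l).
Proof. by elim: l => //= y l IH; rewrite in_cons beqE IH; case: (x == y). Qed.
Lemma nth_bxor s s' i : nth false (bxor s s') i = addb (nth false s i) (nth false s' i).
Proof.
elim: s s' i => [|x s IH] [|y s'] [|i] //=; by rewrite ?addbF.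
Qed.
Lemma size_bxor s s' : size (bxor s s') = maxn (size s) (size s').
Proof.
elim: s s' => [|x s IH] [|y s'] //=; by rewrite ?maxn0 ?max0n ?IH ?maxnSS.
Qed.
Lemma mem_U n s : (s \in U n) = (size s == n).
Proof.
elim: n s => [|n IH] [|b s] //=; rewrite mem_cat.
- by apply/orP => -[] /mapP [].
- apply/orP/idP => [[]|] /=.
  + by case/mapP=> x; rewrite IH => /eqP <- [_ ->].
  + by case/mapP=> x; rewrite IH => /eqP <- [_ ->].
  + by rewrite eqSS => Hs; case: b; [right|left]; apply/mapP; exists s; rewrite ?IH.
Qed.

Local Open Scope ring_scope.

Lemma F2_cases (x : 'F_2) : x = 0 \/ x = 1.
Proof. case: x => [[|[|n]] Hn]; [left|right|]; try by apply/val_inj. by []. Qed.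
Lemma F2_11 : 1 + 1 = 0 :> 'F_2. Proof. by apply/val_inj. Qed.
Lemma F2_10 : 1 != 0 :> 'F_2. Proof. by []. Qed.

Section Vec.
Variable t : nat.
Notation V := 'rV['F_2]_t.

Definition b2F (b : bool) : 'F_2 := if b then 1 else 0.
Lemma b2F_add a b : b2F (addb a b) = b2F a + b2F b.
Proof. by case: a; case: b; rewrite /= ?addr0 ?add0r ?F2_11. Qed.

Definition fb (s : seq bool) : V := \row_(j < t) b2F (nth false s j).
Definition bits (v : V) : seq bool := [seq v 0 j != 0 | j <- enum 'I_t].

Lemma size_bits v : size (bits v) = t.
Proof. by rewrite size_map size_enum_ord. Qed.
Lemma nth_bits v (j : 'I_t) : nth false (bits v) j = (v 0 j != 0).
Proof. by rewrite (nth_map j) ?size_enum_ord // nth_ord_enum. Qed.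
Lemma fb_bits v : fb (bits v) = v.
Proof.
apply/rowP => j; rewrite mxE nth_bits /b2F.
by case: (F2_cases (v 0 j)) => ->; rewrite ?eqxx ?F2_10.
Qed.
Lemma bits_inj : injective bits.
Proof. by move=> u v E; rewrite -(fb_bits u) E fb_bits. Qed.
Lemma fb_inj s s' : size s = t -> size s' = t -> fb s = fb s' -> s = s'.
Proof.
move=> Hs Hs' E; apply: (@eq_from_nth _ false); first by rewrite Hs Hs'.
move=> i; rewrite Hs => Hi.
have := congr1 (fun v : V => v 0 (Ordinal Hi)) E; rewrite !mxE /=.
by case: (nth false s i); case: (nth false s' i); rewrite //= => /eqP; rewrite ?F2_10 // eq_sym F2_10.
Qed.
Lemma fbD s s' : fb (bxor s s') = fb s + fb s'.
Proof. by apply/rowP => j; rewrite !mxE nth_bxor b2F_add. Qed.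
Lemma fb_zeros : fb (zeros t) = 0.
Proof. by apply/rowP => j; rewrite !mxE nth_nseq; case: ifP. Qed.
Lemma fb_ev i : (i < t)%N -> fb (ev t i) = e t i.+1.
Proof.
move=> Hi; apply/rowP => j; rewrite !mxE /ev nth_mkseq //=.
Qed.
Lemma fb_ev_delta (i : 'I_t) : fb (ev t i) = delta_mx 0 i.
Proof.
apply/rowP => j; rewrite !mxE /ev nth_mkseq //=.
have ->: (nat_of_ord j == nat_of_ord i) = (j == i) by [].
by case: (j == i).
Qed.

Lemma addvv (v : V) : v + v = 0.
Proof. by apply/rowP => j; rewrite !mxE; case: (F2_cases (v 0 j)) => ->; rewrite ?addr0 ?F2_11. Qed.
Lemma oppvE (v : V) : - v = v.
Proof. by rewrite -[LHS]add0r -(addvv v) -addrA subrr addr0. Qed.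
Lemma addmm (x y m : V) : (x + m) + (y + m) = x + y.
Proof. by rewrite addrACA addvv addr0. Qed.

End Vec.

Section Lin.
Variable t : nat.
Notation V := 'rV['F_2]_t.
Notation fb := (@fb t).

Definition mxL (rows : seq (seq bool)) : 'M['F_2]_t :=
  \matrix_(i < t, j < t) fb (nth [::] rows i) 0 j.

Lemma row_mxL rows (i : 'I_t) : row i (mxL rows) = fb (nth [::] rows i).
Proof. by apply/rowP => j; rewrite !mxE. Qed.

Lemma fb_foldr rows s r :
  fb (foldr (fun i acc => if nth false s i then bxor (nth [::] rows i) acc else acc)
    (zeros t) r) = \sum_(i <- r) b2F (nth false s i) *: fb (nth [::] rows i).
Proof.
elim: r => [|i r IH]; first by rewrite big_nil fb_zeros.
rewrite big_cons /=; case: (nth false s i); rewrite /b2F.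
- by rewrite fbD IH scale1r.
- by rewrite IH scale0r add0r.
Qed.

Lemma fb_mul rows s : fb s *m mxL rows = fb (linc t rows s).
Proof.
rewrite mulmx_sum_row /linc fb_foldr.
rewrite (eq_bigr (fun i : 'I_t => b2F (nth false s i) *: fb (nth [::] rows i))); last first.
  by move=> i _; rewrite row_mxL mxE.
by rewrite -(big_mkord xpredT (fun i => b2F (nth false s i) *: fb (nth [::] rows i))) /index_iota subn0.
Qed.

Lemma mxL_unit rows inv : invok t rows inv -> mxL rows \in unitmx.
Proof.
rewrite /invok allL_all => /allP H.
suff E : mxL rows *m mxL inv = 1%:M by case: (mulmx1_unit E).
apply/row_matrixP => i; rewrite row_mul row_mxL fb_mul row1.
have := H i; rewrite mem_iota add0n ltn_ord beqE => /(_ isT) /eqP ->.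
exact: fb_ev_delta.
Qed.

Definition img (l : seq (seq bool)) : {set V} := [set v | v \in map fb l].
Lemma in_img v l : (v \in img l) = (v \in map fb l).
Proof. by rewrite inE. Qed.
Lemma img_f s l : s \in l -> fb s \in img l.
Proof. by move=> H; rewrite in_img map_f. Qed.

Lemma img_eq l1 l2 : l1 =i l2 -> img l1 = img l2.
Proof.
move=> E; apply/setP => v; rewrite !in_img; apply/mapP/mapP => -[s Hs ->]; exists s => //.
  by rewrite -E. by rewrite E.
Qed.

Lemma img_sub l1 l2 : {subset l1 <= l2} -> img l1 \subset img l2.
Proof. by move=> E; apply/subsetP => v; rewrite in_img => /mapP [s Hs ->]; apply: img_f; apply: E. Qed.

Lemma affine_img rows av l :
  affine_image (mxL rows) (fb av) (img l) = img (map (affm t rows av) l).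
Proof.
apply/setP => v; rewrite in_img; apply/imsetP/mapP.
- move=> [x]; rewrite in_img => /mapP [s Hs ->] ->; exists (affm t rows av s); first exact: map_f.
  by rewrite /affm fbD fb_mul.
- move=> [s' /mapP [s Hs ->] ->]; exists (fb s); first exact: img_f.
  by rewrite /affm fbD fb_mul.
Qed.

Definition sizet (l : seq (seq bool)) := all (fun s => size s == t) l.

Lemma sidonb_spec l : sidonb l = true <->
  (forall a b c, a \in l -> b \in l -> c \in l -> a != b -> a != c -> b != c ->
     bxor a (bxor b c) \in l -> [|| bxor a (bxor b c) == a, bxor a (bxor b c) == b | bxor a (bxor b c) == c]).
Proof.
rewrite /sidonb; split.
- rewrite allL_all => /allP Ha a b c al bl cl ab ac bc dl.
  move: (Ha a al); rewrite allL_all => /allP /(_ b bl); rewrite allL_all => /allP /(_ c cl).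
  by rewrite !beqE (negbTE ab) (negbTE ac) (negbTE bc) membE dl.
- move=> H; rewrite allL_all; apply/allP => a al; rewrite allL_all; apply/allP => b bl.
  rewrite allL_all; apply/allP => c cl.
  rewrite !beqE; case: eqP => //= /eqP ab; case: eqP => //= /eqP ac; case: eqP => //= /eqP bc.
  rewrite membE; case: ifP => // dl; exact: H.
Qed.

Lemma fb_eq s s' : size s = t -> size s' = t -> (fb s == fb s') = (s == s').
Proof. by move=> Hs Hs'; apply/eqP/eqP => [|->]; [exact: fb_inj|]. Qed.

Lemma size_bxor3 a b c : size a = t -> size b = t -> size c = t -> size (bxor a (bxor b c)) = t.
Proof. by move=> Ha Hb Hc; rewrite !size_bxor Ha Hb Hc !maxnn. Qed.

Lemma sidonb_sidon l : sizet l -> sidonb l -> sidon (img l).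
Proof.
move=> /allP Hsz /sidonb_spec H m1 m2 m3 m4.
rewrite !in_img => /mapP [s1 H1 ->] /mapP [s2 H2 ->] /mapP [s3 H3 ->] /mapP [s4 H4 ->].
have sz : forall s, s \in l -> size s = t by move=> s /Hsz /eqP.
rewrite !fb_eq ?sz // => n12 n13 n14 n23 n24 n34.
apply/eqP => E.
have E4 : fb s4 = fb (bxor s1 (bxor s2 s3)).
  by rewrite !fbD addrA E addrAC addvv add0r.
have Ed : bxor s1 (bxor s2 s3) = s4 by apply: fb_inj; rewrite ?size_bxor3 ?sz.
have := H s1 s2 s3 H1 H2 H3 n12 n13 n23; rewrite Ed => /(_ H4).
by rewrite ![s4 == _]eq_sym (negbTE n14) (negbTE n24) (negbTE n34).
Qed.

Lemma sidon_sidonb l : sizet l -> sidon (img l) -> sidonb l.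
Proof.
move=> /allP Hsz HS; apply/sidonb_spec => a b c al bl cl ab ac bc dl.
have sz : forall s, s \in l -> size s = t by move=> s /Hsz /eqP.
apply/negPn/negP; rewrite !negb_or => /and3P [da db dc].
have := HS (fb a) (fb b) (fb c) (fb (bxor a (bxor b c))).
rewrite !img_f // !fb_eq ?sz // ![_ == bxor _ _]eq_sym ab ac da bc db dc => /(_ isT isT isT isT isT isT isT isT isT isT) /negP; apply; apply/eqP.
by rewrite !fbD addrCA [fb c + (fb b + fb c)]addrCA addvv addr0.
Qed.

End Lin.

Section Aff.
Variable t : nat.
Notation V := 'rV['F_2]_t.

Lemma sidon_sub (S A : {set V}) : sidon S -> A \subset S -> sidon A.
Proof.
move=> HS /subsetP sub m1 m2 m3 m4 h1 h2 h3 h4; apply: HS; exact: sub.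
Qed.

Lemma aff_comp L1 a1 L2 a2 (S : {set V}) :
  affine_image L2 a2 (affine_image L1 a1 S) = affine_image (L1 *m L2) (a1 *m L2 + a2) S.
Proof.
rewrite /affine_image -imset_comp; apply: eq_imset => x /=.
by rewrite mulmxDl mulmxA addrA.
Qed.

Lemma aff_id (S : {set V}) : affine_image 1%:M 0 S = S.
Proof.
rewrite /affine_image (eq_imset _ (fun x => etrans (addr0 _) (mulmx1 x))).
by rewrite imset_id.
Qed.

Lemma sidon_aff L a (S : {set V}) : L \in unitmx -> sidon S -> sidon (affine_image L a S).
Proof.
move=> UL HS m1 m2 m3 m4.
move=> /imsetP [x1 H1 ->] /imsetP [x2 H2 ->] /imsetP [x3 H3 ->] /imsetP [x4 H4 ->].
have inj : forall x y : V, x *m L + a = y *m L + a -> x = y.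
  by move=> x y /addIr /(can_inj (mulmxK UL)).
have neq : forall x y : V, x *m L + a != y *m L + a -> x != y.
  by move=> x y; apply: contra => /eqP ->.
move=> /neq n12 /neq n13 /neq n14 /neq n23 /neq n24 /neq n34.
have := HS x1 x2 x3 x4 H1 H2 H3 H4 n12 n13 n14 n23 n24 n34.
apply: contra => /eqP E; apply/eqP.
rewrite !addmm -!mulmxDl in E.
by apply: (can_inj (mulmxK UL)).
Qed.

Lemma maximal_aff L a (M : {set V}) : L \in unitmx -> maximal_sidon M ->
  maximal_sidon (affine_image L a M).
Proof.
move=> UL [HS HM]; split; first exact: sidon_aff.
move=> S SS sub.
set S' := affine_image (invmx L) (- (a *m invmx L)) S.
have US : invmx L \in unitmx by rewrite unitmx_inv.
have sub' : M \subset S'.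
  apply/subsetP => m mM; apply/imsetP; exists (m *m L + a).
    by apply: (subsetP sub); apply: imset_f.
  by rewrite mulmxDl mulmxK // addrK.
have -> : M = S' by apply: HM => //; apply: sidon_aff.
rewrite /S' aff_comp mulVmx // mulNmx mulmxKV // addNr.
by rewrite aff_id.
Qed.

End Aff.

Section Span.
Variable t : nat.
Notation V := 'rV['F_2]_t.

Lemma span_basis (M : {set V}) : maximal_sidon M ->
  exists (L : 'M['F_2]_t) (a : V), L \in unitmx /\ img t (Bc t) \subset affine_image L a M.
Proof.
move=> [HS HM].
have [M0 | [m0 m0M]] := set_0Vmem M.
  have S1 : sidon [set (0 : V)].
    move=> m1 m2 m3 m4; rewrite !inE => /eqP -> /eqP -> _ _; by rewrite eqxx.
  have := HM _ S1; rewrite M0 sub0set => /(_ isT) /setP /(_ 0).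
  by rewrite !inE eqxx.
pose D : 'M['F_2]_(#|M|, t) := \matrix_(i < #|M|) (enum_val i - m0).
have inD : forall m, m \in M -> (m - m0 <= D)%MS.
  move=> m mM; have <- : row (enum_rank_in m0M m) D = m - m0.
    by rewrite rowK enum_rankK_in.
  exact: row_sub.
have [fullD | nfull] := boolP (row_full D); last first.
  exfalso.
  have [i Hi] : exists i, ~~ (row i (1%:M : 'M['F_2]_t) <= D)%MS.
    apply/existsP; move: nfull; rewrite -sub1mx; apply: contraR.
    rewrite negb_exists => /forallP H; apply/row_subP => i.
    by have := H i; rewrite negbK.
  set w := row i 1%:M in Hi.
  pose d := m0 + w.
  have key : forall a b c, a \in M -> b \in M -> c \in M -> d + a = b + c -> False.
    move=> a b c aM bM cM E.
    have Ed : d = b + c + a by rewrite -E -addrA addvv addr0.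
    move/negP: Hi; apply.
    have -> : w = (b - m0) + (c - m0) + (a - m0).
      by rewrite !oppvE addmm addrA -Ed /d addrAC addvv add0r.
    by apply: addmx_sub; [apply: addmx_sub|]; apply: inD.
  have sid : sidon (d |: M).
    move=> m1 m2 m3 m4; rewrite !in_setU1.
    move=> /orP [/eqP -> | h1] /orP [/eqP -> | h2] /orP [/eqP -> | h3] /orP [/eqP -> | h4];
      rewrite ?eqxx //= => n12 n13 n14 n23 n24 n34; apply/eqP => E.
    - by apply: (key m2 m3 m4).
    - by apply: (key m1 m3 m4) => //; rewrite -E addrC.
    - by apply: (key m4 m1 m2) => //; rewrite E.
    - by apply: (key m3 m1 m2) => //; rewrite E addrC.
    - by move/eqP: E; apply/negP; apply: HS.
  have := HM _ sid (subsetUr _ _) => /setP /(_ d); rewrite setU11 => dM.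
  move/negP: Hi; apply; have -> : w = d - m0 by rewrite /d addrAC subrr add0r.
  by apply: inD; rewrite dM.
pose f := fullrankfun fullD.
pose P := rowsub f D.
have UP : P \in unitmx by exact: fullrowsub_unit.
exists (invmx P), (- (m0 *m invmx P)); split; first by rewrite unitmx_inv.
apply/subsetP => v; rewrite in_img => /mapP [s sB ->].
move: sB; rewrite /Bc in_cons => /orP [/eqP -> | /mapP [i]].
  rewrite fb_zeros; apply/imsetP; exists m0 => //; by rewrite subrr.
rewrite mem_iota add0n => /andP [_ Hi] ->.
pose k := Ordinal Hi.
have -> : fb t (ev t i) = fb t (ev t k) by [].
rewrite fb_ev_delta -row1 -(mulmxV UP) row_mul row_rowsub rowK.
apply/imsetP; exists (enum_val (f k)); first exact: enum_valP.
by rewrite mulmxBl.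
Qed.

End Span.

Arguments e : simpl never.
Arguments fb : simpl never.

Section Classify.
Variable t : nat.
Notation V := 'rV['F_2]_t.

Lemma fc_trip : fullcheck t -> tripcheck t.
Proof. by case/and3P. Qed.
Lemma fc0 : fullcheck t -> maxcheck t (Bc t).
Proof. by case/and3P. Qed.
Lemma fc1 x : fullcheck t -> x \in compl t -> maxcheck t (Bc t ++ [:: x]).
Proof.
case/and3P => _ _; rewrite allL_all => /allP H /H.
by case: ifP.
Qed.
Lemma fc2 x y : fullcheck t -> x \in compl t -> y \in compl t -> x != y ->
  maxcheck t (Bc t ++ [:: x; y]).
Proof.
case/and3P => _ _; rewrite allL_all => /allP H /H.
case: ifP => // _; rewrite allL_all => /allP H2 /H2.
by rewrite beqE => /[swap] /negbTE ->.
Qed.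
Lemma tc x y z : tripcheck t -> x \in compl t -> y \in compl t -> z \in compl t ->
  x != y -> x != z -> y != z -> sidonb (Bc t ++ [:: x]) -> sidonb (Bc t ++ [:: x; y]) ->
  ~~ sidonb (Bc t ++ [:: x; y; z]).
Proof.
rewrite /tripcheck allL_all => /allP H /H + yC zC xy xz yz sx sxy.
rewrite sx allL_all => /allP /(_ y yC); rewrite sxy allL_all => /allP /(_ z zC).
by rewrite !beqE (negbTE xy) (negbTE xz) (negbTE yz).
Qed.

Lemma size_Bc : sizet t (Bc t).
Proof.
rewrite /sizet /Bc /= size_nseq eqxx /=; apply/allP => s /mapP [i _ ->].
by rewrite size_mkseq.
Qed.

Lemma seteq_mem l1 l2 : seteq l1 l2 -> l1 =i l2.
Proof.
rewrite /seteq !allL_all => /andP [/allP H1 /allP H2] x.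
apply/idP/idP => [/H1|/H2]; by rewrite membE.
Qed.

Lemma use_max (M : {set V}) l : maximal_sidon M -> sizet t l -> M = img t l ->
  maxcheck t l -> exists (L : 'M['F_2]_t) (a : V),
    L \in unitmx /\ affine_image L a M \in map (img t) (NFc t).
Proof.
move=> [HS HM] szl EM; have sb : sidonb l by apply: (@sidon_sidonb t) => //; rewrite -EM.
rewrite /maxcheck sb; case: ifP => [Hw _ | _ Hc].
  exfalso; move: Hw; rewrite hasL_has => /hasP [z].
  rewrite /cands mem_filter => /andP [_ zU]; rewrite membE.
  case: ifP => // zl szl'.
  have szz : size z = t by move: zU; rewrite mem_U => /eqP.
  have szr : sizet t (rcons l z) by rewrite /sizet all_rcons szz eqxx.
  have Sr := sidonb_sidon szr szl'.
  have sub : M \subset img t (rcons l z).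
    by rewrite EM; apply: img_sub => s sl; rewrite mem_rcons in_cons sl orbT.
  have := HM _ Sr sub => /setP /(_ (fb t z)).
  rewrite img_f ?mem_rcons ?mem_head // EM in_img => /mapP [s sl E].
  have : z = s.
    apply: (@fb_inj t) => //; by move/allP: szl => /(_ s sl) /eqP.
  by move=> zs; rewrite zs sl in zl.

move: Hc; rewrite hasL_has => /hasP [[[rows inv] av] _].
rewrite /certok /=; case: ifP => // Hinv; rewrite hasL_has => /hasP [n nN Hn].
exists (mxL t rows), (fb t av); split; first exact: (@mxL_unit t rows inv).
rewrite EM affine_img (img_eq t (seteq_mem Hn)); exact: map_f.
Qed.

Lemma classify (M : {set V}) : fullcheck t -> maximal_sidon M -> img t (Bc t) \subset M ->
  exists (L : 'M['F_2]_t) (a : V),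
    L \in unitmx /\ affine_image L a M \in map (img t) (NFc t).
Proof.
move=> FC HMM sBM; have HS := proj1 HMM.
pose X := M :\: img t (Bc t).
have Xc : forall x, x \in X -> bits x \in compl t.
  move=> x; rewrite in_setD => /andP [nB _].
  rewrite /compl mem_filter mem_U size_bits eqxx; apply/andP; split => //; rewrite membE.
  apply: contra nB => H; by rewrite -(fb_bits x) img_f.
have Edec : M = img t (Bc t ++ map (@bits t) (enum X)).
  apply/setP => v; rewrite in_img map_cat -map_comp (eq_map (@fb_bits t)) map_id mem_cat.
  rewrite mem_enum -in_img in_setD.
  case vB: (v \in img t (Bc t)) => //=.
  by rewrite (subsetP sBM).
have szX : forall ys, {subset ys <= enum X} -> sizet t (Bc t ++ map (@bits t) ys).
  move=> ys _; rewrite /sizet all_cat; apply/andP; split; first exact: size_Bc.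
  apply/allP => s /mapP [x _ ->].
  by rewrite size_bits.
have sbX : forall ys, {subset ys <= enum X} -> sidonb (Bc t ++ map (@bits t) ys).
  move=> ys sub; apply: sidon_sidonb; first exact: szX.
  apply: (sidon_sub HS); rewrite [in X in _ \subset X]Edec; apply: img_sub.
  move=> s; rewrite !mem_cat => /orP [->//|/mapP [x xy ->]].
  by rewrite map_f ?orbT // sub.
have uX := enum_uniq (mem X).
have inX : forall x, x \in enum X -> bits x \in compl t by move=> x; rewrite mem_enum; apply: Xc.
move: Edec szX sbX inX uX; case: (enum X) => [|x [|y [|z r]]] Edec szX sbX inX uX.
- apply: (use_max HMM) Edec _; first by apply: szX.
  by rewrite /= cats0; apply: fc0.
- apply: (use_max HMM) Edec _; first by apply: szX.
  by rewrite /=; apply: fc1 => //; apply: inX; rewrite mem_head.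
- apply: (use_max HMM) Edec _; first by apply: szX.
  rewrite /=; apply: fc2 => //; try (apply: inX; rewrite !inE eqxx ?orbT //).
  move: uX => /= /andP []; rewrite inE => xy _.
  by apply: contra xy => /eqP /bits_inj ->.
- exfalso.
  move: uX => /= /and3P []; rewrite !inE !negb_or => /andP [xy /andP [xz _]] /andP [yz _] _.
  have bn : forall u v : V, u != v -> bits u != bits v.
    by move=> u v; apply: contra => /eqP /bits_inj ->.
  have := tc (fc_trip FC) (inX x _) (inX y _) (inX z _) (bn _ _ xy) (bn _ _ xz) (bn _ _ yz).
  rewrite !inE !eqxx ?orbT => /(_ isT isT isT).
  have sub1 : {subset [:: x] <= [:: x, y, z & r]}.
    by move=> s; rewrite !inE => /eqP ->; rewrite eqxx.
  have sub2 : {subset [:: x; y] <= [:: x, y, z & r]}.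
    by move=> s; rewrite !inE => /orP [/eqP ->|/eqP ->]; rewrite eqxx ?orbT.
  have sub3 : {subset [:: x; y; z] <= [:: x, y, z & r]}.
    by move=> s; rewrite !inE => /orP [/eqP ->|/orP [/eqP ->|/eqP ->]]; rewrite eqxx ?orbT.
  have s1 : sidonb (Bc t ++ [:: bits x]) := sbX [:: x] sub1.
  have s2 : sidonb (Bc t ++ [:: bits x; bits y]) := sbX [:: x; y] sub2.
  have s3 : sidonb (Bc t ++ [:: bits x; bits y; bits z]) := sbX [:: x; y; z] sub3.
  by move=> /(_ s1 s2); rewrite s3.
Qed.

End Classify.

Local Open Scope ring_scope.

Lemma img_cons t s l : img t (s :: l) = fb t s |: img t l.
Proof. by apply/setP => v; rewrite in_setU1 !in_img. Qed.
Lemma img_nil t : img t [::] = set0.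
Proof. by apply/setP => v; rewrite in_img. Qed.

Ltac nf_tac := rewrite /normal_forms /NFc /= /Bc /=;
  rewrite !img_cons img_nil !fb_zeros ?fbD !fb_ev //;
  rewrite /=; repeat congr (_ :: _); apply/setP => v; rewrite !inE !orbA ?orbF.

Lemma NF_eq t : (1 <= t <= 6)%N -> normal_forms t = map (img t) (NFc t).
Proof.
by case: t => [|[|[|[|[|[|[|t]]]]]]] //= _; nf_tac.
Qed.

Lemma fc_ok : [&& fullcheck 1, fullcheck 2, fullcheck 3, fullcheck 4, fullcheck 5 & fullcheck 6].
Proof. by vm_compute. Qed.

Theorem proposition1p8 (t : nat) (M : {set 'rV['F_2]_t}) :
  (1 <= t <= 6)%N -> maximal_sidon M ->
  exists (L : 'M['F_2]_t) (a : 'rV['F_2]_t),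
    L \in unitmx /\ affine_image L a M \in normal_forms t.
Proof.
move=> Ht HM.
have FC : fullcheck t.
  move: Ht; case/andP: fc_ok => f1 /andP [f2 /andP [f3 /andP [f4 /andP [f5 f6]]]].
  case: (t) => [|[|[|[|[|[|[|n]]]]]]] Ht;
    [exfalso; by case/andP: Ht|exact: f1|exact: f2|exact: f3|exact: f4|exact: f5|exact: f6|exfalso; by case/andP: Ht].
have [L1 [a1 [U1 Hsub]]] := span_basis HM.
have HM' := maximal_aff a1 U1 HM.
have [L2 [a2 [U2 Hin]]] := classify FC HM' Hsub.
exists (L1 *m L2), (a1 *m L2 + a2); split; first by rewrite unitmx_mul U1 U2.
by rewrite -aff_comp NF_eq.
Qed.
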